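(* Let $\mathbf P=(P,\leq,{}',0,1)$ be a bounded poset with a unary operation $'$ and let $(P,\sqcup,{}',0,1)$ be an algebra assigned to $\mathbf P$. Then $\mathbf P$ is a generalized orthomodular poset if and only if the following hold: (i) for all $x,y,z\in P$: if $(x\sqcup z)\sqcup(((x'\sqcap w)\sqcap((x\sqcup y)\sqcap w))\sqcup z)=z$ for all $w\in P$, then $(x\sqcup y)\sqcup z=z$; (ii) $(x\sqcap y)\sqcup x=x$ for all $x,y\in P$; (iii) $(x\sqcup y)\sqcup(x'\sqcup y)=1$ for all $x,y\in P$; (iv) $x''=x$ for all $x\in P$.
   Context: For a poset and $A\subseteq P$: $L(A)$ is the set of lower bounds of $A$, $U(A)$ the set of upper bounds; $L(a,b)=L(\{a,b\})$, $U(a,B)=U(\{a\}\cup B)$, etc. An orthoposet is a bounded poset $(P,\leq,{}',0,1)$ with a unary operation $'$ that is an antitone involution ($x''=x$; $x\leq y\Rightarrow y'\leq x'$) and a complementation ($L(x,x')=\{0\}$, $U(x,x')=\{1\}$). A generalized orthomodular poset is an orthoposet such that for all $x,y$, $x\leq y$ implies $U(y)=U(x,L(x',y))$. An algebra assigned to a bounded poset with unary operation $\mathbf P=(P,\leq,{}',0,1)$ is an algebra $(P,\sqcup,{}',0,1)$ of type $(2,1,0,0)$ (same $'$, $0$, $1$) such that for all $x,y\in P$: $x\sqcup y=y$ whenever $x\leq y$, and $x\sqcup y=y\sqcup x\in U(x,y)$. We write $x\sqcap y:=(x'\sqcup y')'$. *)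

(* Defs.v *)
Set Implicit Arguments.

Section Posets.
Variable T : Type.
Variable le : T -> T -> Prop.

Definition Lb (A : T -> Prop) : T -> Prop := fun y => forall a, A a -> le y a.
Definition Ub (A : T -> Prop) : T -> Prop := fun y => forall a, A a -> le a y.
Definition pair (a b : T) : T -> Prop := fun x => x = a \/ x = b.
Definition single (a : T) : T -> Prop := fun x => x = a.
Definition add (a : T) (B : T -> Prop) : T -> Prop := fun x => x = a \/ B x.
Definition set_eq (A B : T -> Prop) : Prop := forall x, A x <-> B x.

Definition is_poset : Prop :=
  (forall x, le x x) /\
  (forall x y, le x y -> le y x -> x = y) /\
  (forall x y z, le x y -> le y z -> le x z).

Definition bounded_poset (zero one : T) : Prop :=
  is_poset /\ (forall x, le zero x) /\ (forall x, le x one).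

Definition orthoposet (c : T -> T) (zero one : T) : Prop :=
  bounded_poset zero one /\
  (forall x, c (c x) = x) /\
  (forall x y, le x y -> le (c y) (c x)) /\
  (forall x, set_eq (Lb (pair x (c x))) (single zero)) /\
  (forall x, set_eq (Ub (pair x (c x))) (single one)).

Definition generalized_orthomodular_poset (c : T -> T) (zero one : T) : Prop :=
  orthoposet c zero one /\
  forall x y, le x y ->
    set_eq (Ub (single y)) (Ub (add x (Lb (pair (c x) y)))).

Definition assigned_algebra (join : T -> T -> T) : Prop :=
  (forall x y, le x y -> join x y = y) /\
  (forall x y, join x y = join y x) /\
  (forall x y, Ub (pair x y) (join x y)).

End Posets.

Definition meet_of (T : Type) (join : T -> T -> T) (c : T -> T) (x y : T) : T :=
  c (join (c x) (c y)).

(* Main.v *)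
Require Import Defs.
From Stdlib Require Import Setoid.

Theorem theorem2 (T : Type) (le : T -> T -> Prop) (c : T -> T) (zero one : T)
    (join : T -> T -> T) :
  bounded_poset le zero one ->
  assigned_algebra le join ->
  let meet := meet_of join c in
  generalized_orthomodular_poset le c zero one <->
  ((forall x y z : T,
      (forall w : T,
         join (join x z)
              (join (meet (meet (c x) w) (meet (join x y) w)) z) = z) ->
      join (join x y) z = z) /\
   (forall x y : T, join (meet x y) x = x) /\
   (forall x y : T, join (join x y) (join (c x) y) = one) /\
   (forall x : T, c (c x) = x)).
Proof.
  intros [[Hrefl [Hanti Htrans]] [H0 H1]] [Hj [Hcomm Hub]] meet.
  assert (jl : forall a b, le a (join a b)) by (intros a b; apply (Hub a b); left; reflexivity).
  assert (jr : forall a b, le b (join a b)) by (intros a b; apply (Hub a b); right; reflexivity).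
  assert (jle : forall a b, join a b = b -> le a b) by (intros a b E; rewrite <- E; apply jl).
  assert (jleast_dummy : True) by exact I.
  split.
  - intros [[_ [Hinv [Hac [HL HU]]]] Hom].
    assert (mle : forall a b, le a b -> meet a b = a).
    { intros a b Hab. unfold meet, meet_of. rewrite (Hcomm (c a)), Hj by (apply Hac; exact Hab). apply Hinv. }
    assert (mle' : forall a b, le a b -> meet b a = a).
    { intros a b Hab. unfold meet, meet_of. rewrite Hj by (apply Hac; exact Hab). apply Hinv. }
    split; [|split; [|split]].
    + intros x y z Hw.
      apply Hj.
      assert (xz : le x z).
      { specialize (Hw x). apply Htrans with (join x z). apply jl. rewrite <- Hw at 2. apply jl. }
      assert (Hxy : le x (join x y)) by apply jl.
      destruct (Hom x (join x y) Hxy z) as [_ Hb].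
      apply (Hb). 2: reflexivity.
      intros a [Ea | Ha].
      * subst a; exact xz.
      * assert (v1 : le a (c x)) by (apply Ha; left; reflexivity).
        assert (v2 : le a (join x y)) by (apply Ha; right; reflexivity).
        specialize (Hw a).
        rewrite (mle' a (c x) v1), (mle' a (join x y) v2), (mle a a (Hrefl a)) in Hw.
        apply Htrans with (join a z). apply jl.
        apply Htrans with (join (join x z) (join a z)). apply jr.
        rewrite Hw. apply Hrefl.
    + intros x y. apply Hj. unfold meet, meet_of.
      rewrite <- (Hinv x) at 2. apply Hac. apply jl.
    + intros x y. apply (HU x). intros a [Ea|Ea]; subst a.
      * apply Htrans with (join x y). apply jl. apply jl.
      * apply Htrans with (join (c x) y). apply jl. apply jr.
    + exact Hinv.
  - intros [Hi [Hii [Hiii Hiv]]].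
    assert (mlel : forall a b, le (meet a b) a) by (intros a b; apply jle; apply Hii).
    assert (mler : forall a b, le (meet a b) b).
    { intros a b. unfold meet, meet_of. rewrite Hcomm. apply (mlel b a). }
    assert (Hac : forall x y, le x y -> le (c y) (c x)).
    { intros x y Hxy. pose proof (mlel (c x) (c y)) as M. unfold meet, meet_of in M.
      rewrite !Hiv, Hj in M by exact Hxy. exact M. }
    assert (U1 : forall x u, le x u -> le (c x) u -> u = one).
    { intros x u A B. rewrite <- (Hiii x u). rewrite (Hj _ _ A), (Hj _ _ B).
      symmetry. apply Hj. apply Hrefl. }
    assert (c0 : c zero = one).
    { apply Hanti. apply H1. rewrite <- (Hiv one). apply Hac. apply H0. }
    assert (c1 : c one = zero) by (rewrite <- c0; apply Hiv).
    split.
    + split; [split; [split; [exact Hrefl|split; assumption]|split; assumption]|].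
      split; [exact Hiv|split; [exact Hac|split]].
      * intros x l. split.
        -- intros Hl. unfold single.
           assert (A : le l x) by (apply Hl; left; reflexivity).
           assert (B : le l (c x)) by (apply Hl; right; reflexivity).
           assert (E : c l = one).
           { apply (U1 x). rewrite <- (Hiv x) at 1. apply Hac. exact B. apply Hac. exact A. }
           rewrite <- (Hiv l), E. exact c1.
        -- intros E a _. unfold single in E. subst l. apply H0.
      * intros x u. split.
        -- intros Hu. apply (U1 x). apply Hu; left; reflexivity. apply Hu; right; reflexivity.
        -- intros E a _. unfold single in E. subst u. apply H1.
    + intros x y Hxy u. split.
      * intros Hu. assert (yu : le y u) by (apply Hu; reflexivity).
        intros a [Ea|Ha].
        -- subst a. apply Htrans with y; assumption.
        -- apply Htrans with y. apply Ha; right; reflexivity. exact yu.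
      * intros Hu a Ea. unfold single in Ea. subst a.
        assert (xu : le x u) by (apply Hu; left; reflexivity).
        apply jle. rewrite <- (Hj _ _ Hxy). apply Hi.
        intros w. rewrite (Hj _ _ xu).
        rewrite (Hj _ _ Hxy).
        rewrite (Hj (meet (meet (c x) w) (meet y w)) u).
        apply Hj, Hrefl.
        apply Hu. right. intros b [Eb|Eb]; subst b.
        -- apply Htrans with (meet (c x) w). apply mlel. apply mlel.
        -- apply Htrans with (meet y w). apply mler. apply mlel.
Qed.
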